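(* Fix $0<R<1$, $\varepsilon>0$ with $1-R-\varepsilon>0$, a positive integer $\ell$, and let $q$ be a prime power with $q\ge \max\left(\ell^{\frac{8R}{\varepsilon}+6},\ \ell\cdot 2^{4/\varepsilon}\right)$. Let $L:=2\ell/\varepsilon$ and let $\mathcal{C}\subseteq \mathbb{F}_q^n$ be a random linear code of rate $R$. Then with probability at least $1-q^{-\varepsilon n L/8}$, for every choice of input lists $S_1,\dots,S_n\subseteq\mathbb{F}_q$ each of size $\ell$, every linearly independent subset of $\mathcal{C}\cap B(1-R-\varepsilon, S_1\times\cdots\times S_n)$ has size less than $2\ell/\varepsilon$.
   Context: A random linear code of rate $R$ in $\mathbb{F}_q^n$ is the column span of a generator matrix $\mathbf{G}\in\mathbb{F}_q^{n\times Rn}$ whose entries are independent and uniformly random elements of $\mathbb{F}_q$ (here $Rn$ is an integer). For sets $S_1,\dots,S_n\subseteq\mathbb{F}_q$ of size $\ell$ and $\rho\in(0,1)$, the $\rho$-radius $\ell$-list-recovery ball $B(\rho,S_1\times\cdots\times S_n)$ is the set of $x\in\mathbb{F}_q^n$ such that $|\{i\in[n]: x[i]\in S_i\}|\ge(1-\rho)n$. *)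

(* Defs.v *)
From HB Require Import structures.
From mathcomp Require Import all_boot all_order all_algebra.
From mathcomp Require Import reals exp.
Set Implicit Arguments. Unset Strict Implicit. Unset Printing Implicit Defensive.
Import Order.TTheory GRing.Theory Num.Theory.
Local Open Scope ring_scope.

Definition lin_code (F : finFieldType) (n k : nat) (G : 'M[F]_(n, k)) : {set 'cV[F]_n} :=
  [set x : 'cV[F]_n | [exists m : 'cV[F]_k, x == G *m m]].

Definition lr_ball (RR : realType) (F : finFieldType) (n : nat) (rho : RR)
  (S : 'I_n -> {set F}) : {set 'cV[F]_n} :=
  [set x : 'cV[F]_n | (1 - rho) * n%:R <= #|[set i : 'I_n | x i ord0 \in S i]|%:R].

Definition good_code (RR : realType) (F : finFieldType) (n k l : nat) (rho bound : RR)
  (G : 'M[F]_(n, k)) : bool :=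
  [forall S : {ffun 'I_n -> {set F}},
    [forall i : 'I_n, #|S i| == l] ==>
    [forall T : {set 'cV[F]_n},
      (T \subset lin_code G :&: lr_ball rho S) ==> free (enum T) ==>
      (#|T|%:R < bound)]].

(* Main.v *)
Require Import Defs.
From HB Require Import structures.
From mathcomp Require Import all_boot all_order all_algebra.
From mathcomp Require Import reals exp.
From mathcomp Require Import ring lra.
Import Order.TTheory GRing.Theory Num.Theory.
Local Open Scope ring_scope.
Set Implicit Arguments. Unset Strict Implicit. Unset Printing Implicit Defensive.


Lemma card_le_sum (T I : finType) (A : {set T}) (P : pred I) (f : I -> {set T}) :
  (forall x, x \in A -> exists2 i, P i & x \in f i) ->
  (#|A| <= \sum_(i | P i) #|f i|)%N.
Proof.
move=> H.
rewrite -sum1_card.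
apply: (@leq_trans (\sum_(x in A) \sum_(i | P i) (x \in f i : nat))).
  apply: leq_sum => x xA; have [i Pi xi] := H x xA.
  by rewrite (bigD1 i) //= xi.
rewrite exchange_big /=; apply: leq_sum => i _.
rewrite -sum1_card [X in (_ <= X)%N]big_mkcond [X in (X <= _)%N]big_mkcond /=.
apply: leq_sum => x _. by case: (x \in A); case: (x \in f i).
Qed.

Lemma card_PA (F : finFieldType) n (S : 'I_n -> {set F}) (A : {set 'I_n}) l :
  (forall i, #|S i| = l) ->
  #|[set x : 'cV[F]_n | [forall i in A, x i ord0 \in S i]]| = (l ^ #|A| * #|F| ^ (n - #|A|))%N.
Proof.
move=> hS.
pose Fam := fun i : 'I_n => [pred y : F | (i \in A) ==> (y \in S i)].
have -> : [set x : 'cV[F]_n | [forall i in A, x i ord0 \in S i]] =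
          [set (\col_i (f i) : 'cV[F]_n) | f : {ffun 'I_n -> F} in family Fam].
  apply/setP => x; rewrite inE; apply/idP/imsetP.
  - move=> H; exists [ffun i => x i ord0].
      apply/familyP => i; rewrite ffunE /Fam; apply/implyP => iA.
      exact: (forall_inP H i iA).
    by apply/matrixP => i j; rewrite mxE ffunE (ord1 j).
  - case=> f /familyP Hf ->; apply/forall_inP => i iA; rewrite mxE.
    by have := Hf i; rewrite /Fam /= iA.
rewrite card_imset; last first.
  move=> f g /matrixP H; apply/ffunP => i; have := H i ord0; by rewrite !mxE.
rewrite card_family foldrE big_image /=.
rewrite (bigID (mem A)) /=.
rewrite (eq_bigr (fun _ => l)); last by move=> i iA; rewrite -(hS i); apply: eq_card => y; rewrite /= iA.
rewrite [X in (_ * X)%N](eq_bigr (fun _ => #|F|)); last first.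
  by move=> i iA; apply: eq_card => y; rewrite /= (negbTE iA).
rewrite !prod_nat_const; congr (_ * _)%N; congr (_ ^ _)%N.
have hC := cardsC A; rewrite card_ord in hC.
rewrite (_ : (n - #|A|)%N = #|~: A|); last by rewrite -{1}hC addKn.
apply: eq_card => i; by rewrite !inE.
Qed.

Lemma card_setsT n : #|{: {set 'I_n}}| = (2 ^ n)%N.
Proof. by rewrite -cardsT -powersetT card_powerset cardsT card_ord. Qed.

Lemma ball_card (RR : realType) (F : finFieldType) n l (rho : RR) (S : 'I_n -> {set F}) :
  (forall i, #|S i| = l) -> (0 < l)%N -> (l <= #|F|)%N ->
  (#|lr_ball rho S|%:R : RR) <=
    2 ^+ n * ((l%:R / #|F|%:R) `^ ((1 - rho) * n%:R) * #|F|%:R ^+ n).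
Proof.
move=> hS l0 lq.
pose P (A : {set 'I_n}) := [set x : 'cV[F]_n | [forall i in A, x i ord0 \in S i]].
have step : (#|lr_ball rho S| <= \sum_(A : {set 'I_n} | ((1 - rho) * n%:R <= #|A|%:R)%R) #|P A|)%N.
  apply: card_le_sum => x; rewrite inE => hx.
  exists [set i | x i ord0 \in S i] => //.
  by rewrite inE; apply/forall_inP => i; rewrite inE.
have q0 : (0 < #|F|)%N by apply: leq_trans lq.
set Q : RR := #|F|%:R.
have Q0 : 0 < Q by rewrite ltr0n.
set C := (l%:R / Q) `^ ((1 - rho) * n%:R) * Q ^+ n.
have C0 : 0 <= C by rewrite mulr_ge0 ?powR_ge0 ?exprn_ge0 ?ltW.
apply: (le_trans (_ : _ <= (\sum_(A : {set 'I_n} | ((1 - rho) * n%:R <= #|A|%:R)%R) #|P A|)%:R)).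
  by rewrite ler_nat.
rewrite natr_sum.
apply: (@le_trans _ _ (\sum_(A : {set 'I_n} | (1 - rho) * n%:R <= #|A|%:R) C)).
  apply: ler_sum => A hA.
  rewrite (card_PA A hS) natrM !natrX /C.
  have An : (#|A| <= n)%N by have := max_card (mem A); rewrite card_ord.
  rewrite exprB // ?unitfE ?gt_eqF //.
  have -> : (l%:R : RR) ^+ #|A| * (Q ^+ n / Q ^+ #|A|) = (l%:R / Q) ^+ #|A| * Q ^+ n.
    by rewrite exprMn exprVn mulrA mulrAC.
  apply: ler_wpM2r; first by rewrite exprn_ge0 // ltW.
  rewrite -powR_mulrn; last by rewrite divr_ge0 ?ler0n // ltW.
  apply: (ger_powR _ hA).
  by rewrite divr_gt0 ?ltr0n //= ler_pdivrMr // mul1r ler_nat.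
rewrite sumr_const -[C *+ _]mulr_natr [2 ^+ n * C]mulrC; apply: ler_wpM2l => //.
rewrite -natrX ler_nat -card_setsT; exact: max_card.
Qed.

Lemma fiber_sum (T U : finType) (phi : T -> U) (X : {pred U}) :
  #|[set x | phi x \in X]| = (\sum_(y in X) #|[set x | phi x == y]|)%N.
Proof.
rewrite -sum1_card (partition_big phi (mem X)) /=; last by move=> x; rewrite inE.
apply: eq_bigr => y yX; rewrite -sum1_card; apply: eq_bigl => x.
rewrite !inE; case: (phi x =P y) => [->|]; by rewrite ?yX ?andbF ?andbT.
Qed.

Lemma count_fiber (F : finFieldType) n k m (u : {ffun 'I_m -> 'cV[F]_k})
  (X : {set {ffun 'I_m -> 'cV[F]_n}}) :
  row_free (\matrix_(j < m) (u j)^T) ->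
  (#|[set G : 'M[F]_(n,k) | [ffun j => G *m u j] \in X]| * #|F| ^ (n * m)
    = #|X| * #|F| ^ (n * k))%N.
Proof.
move=> /row_freeP [B hB].
pose phi (G : 'M[F]_(n,k)) : {ffun 'I_m -> 'cV[F]_n} := [ffun j => G *m u j].
have hBu : forall j, B^T *m u j = delta_mx j 0.
  move=> j; apply: trmx_inj; rewrite trmx_mul trmxK trmx_delta.
  by rewrite -[(u j)^T](rowK (fun j => (u j)^T)) -row_mul hB row1.
pose D (Y : {ffun 'I_m -> 'cV[F]_n}) : 'M[F]_(n,k) := (\matrix_(i, j) Y j i ord0) *m B^T.
have hD : forall Y, phi (D Y) = Y.
  move=> Y; apply/ffunP => j; rewrite ffunE /D -mulmxA hBu -colE.
  by apply/matrixP => i i'; rewrite !mxE (ord1 i').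
have phiD : forall G H, phi (G + H) = phi G + phi H.
  by move=> G H; apply/ffunP => j; rewrite !ffunE mulmxDl.
have phiN : forall G, phi (- G) = - phi G.
  by move=> G; apply/ffunP => j; rewrite !ffunE mulNmx.
have cfib : forall Y, #|[set G | phi G == Y]| = #|[set G | phi G == 0]|.
  move=> Y.
  have -> : [set G | phi G == Y] = [set G + D Y | G in [set G | phi G == 0]].
    apply/setP => G; rewrite inE; apply/eqP/imsetP.
    - move=> hG; exists (G - D Y); last by rewrite subrK.
      by rewrite inE phiD phiN hD hG subrr.
    - by case=> G' ; rewrite inE => /eqP h0 ->; rewrite phiD h0 hD add0r.
  by rewrite card_imset //; apply: addIr.
have key : forall (X : {set {ffun 'I_m -> 'cV[F]_n}}),
    #|[set G | phi G \in X]| = (#|X| * #|[set G | phi G == 0%R]|)%N.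
  move=> X'; rewrite fiber_sum (eq_bigr (fun _ => #|[set G | phi G == 0%R]|)) //.
  by rewrite sum_nat_const.
have tot := key setT.
rewrite (_ : [set G | phi G \in setT] = setT) in tot; last by apply/setP => G; rewrite !inE.
rewrite cardsT cardsT card_mx card_ffun card_mx card_ord muln1 in tot.
rewrite (key X) -mulnA -expnM in tot *.
by rewrite tot; congr (_ * _)%N; exact: mulnC.
Qed.

Lemma rowfree_of_free (F : finFieldType) n k m (s : m.-tuple 'cV[F]_n)
  (G : 'M[F]_(n,k)) (u : {ffun 'I_m -> 'cV[F]_k}) :
  free s -> (forall j : 'I_m, G *m u j = s`_j) -> row_free (\matrix_(j < m) (u j)^T).
Proof.
move=> fs hu; rewrite -kermx_eq0; apply/eqP/row_matrixP => i; rewrite row0.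
set v := row i _.
have hv : v *m (\matrix_(j < m) (u j)^T) = 0 by apply/sub_kermxP; exact: row_sub.
have h1 : \sum_j v 0 j *: u j = 0.
  apply: trmx_inj; rewrite trmx0 -hv mulmx_sum_row raddf_sum /=.
  by apply: congr_big => // j _; rewrite linearZ /= rowK.
have h2 : \sum_j v 0 j *: s`_j = 0.
  have : G *m (\sum_j v 0 j *: u j) = 0 by rewrite h1 mulmx0.
  rewrite mulmx_sumr => h3; apply: (etrans _ h3); apply: eq_bigr => j _.
  by rewrite -scalemxAr hu.
apply/rowP => j; rewrite [RHS]mxE. exact: (freeP fs (fun j => v 0 j) h2 j).
Qed.


Ltac pos := repeat first [ done | rewrite invr_gt0 | apply: mulr_gt0 | apply: divr_gt0 | apply: exprn_gt0 | apply: powR_gt0 | lra ].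

Lemma final_ineq (RR : realType) (n k l m : nat) (R eps Q : RR) :
  0 < R -> 0 < eps -> (0 < l)%N -> 0 < Q ->
  (l%:R : RR) `^ (8 * R / eps + 6) <= Q ->
  (l%:R : RR) * (2 : RR) `^ (4 / eps) <= Q ->
  k%:R = R * n%:R -> 2 * l%:R / eps <= m%:R ->
  Q ^+ (l * n) * Q ^+ (k * m) * (2 ^+ n * ((l%:R / Q) `^ ((R + eps) * n%:R) * Q ^+ n)) ^+ m
    / Q ^+ (n * m) <= Q `^ (- (eps * n%:R * (2 * l%:R / eps) / 8)).
Proof.
move=> R0 e0 l0 Q0 h1 h2 hk hm.
have lpos : (0 : RR) < l%:R by rewrite ltr0n.
have l1 : (1 : RR) <= l%:R by rewrite ler1n.
set a := ln (2 : RR). set b := ln (l%:R : RR). set c := ln Q.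
have a0 : 0 <= a by apply: ln_ge0; lra.
have b0 : 0 <= b by apply: ln_ge0.
have h1' : (8 * R / eps + 6) * b <= c.
  by rewrite -ln_powR ler_ln ?posrE ?powR_gt0.
have h2' : b + 4 / eps * a <= c.
  by rewrite -ln_powR -lnM ?posrE ?powR_gt0 // ler_ln ?posrE ?mulr_gt0 ?powR_gt0.
have c0 : 0 <= c.
  apply: le_trans h2'; apply: addr_ge0 => //; apply: mulr_ge0 => //; apply: divr_ge0; lra.
have h1e : (8 * R + 6 * eps) * b <= eps * c.
  have -> : (8 * R + 6 * eps) = eps * (8 * R / eps + 6) by field; lra.
  rewrite -mulrA; apply: ler_wpM2l; lra.
have h2e : eps * b + 4 * a <= eps * c.
  have -> : eps * b + 4 * a = eps * (b + 4 / eps * a) by field; lra.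
  apply: ler_wpM2l; lra.
have hme : 2 * l%:R <= eps * m%:R.
  by rewrite -ler_pdivrMl // mulrC.
set D := a + (R + eps) * b - eps * c.
have hD : D <= - (5 / 8) * eps * c by rewrite /D; lra.
have m0 : (0 : RR) <= m%:R by [].
have hmD : m%:R * D <= - (5 / 4) * l%:R * c.
  have : m%:R * D <= m%:R * (- (5 / 8) * eps * c) by apply: ler_wpM2l.
  have : 2 * l%:R * c <= eps * m%:R * c by apply: ler_wpM2r.
  lra.
have n0 : (0 : RR) <= n%:R by [].
have lQ : 0 < l%:R / Q by rewrite divr_gt0.
have pB : 0 < 2 ^+ n * ((l%:R / Q) `^ ((R + eps) * n%:R) * Q ^+ n).
  pos.
rewrite -ler_ln ?posrE; [|pos|pos].
rewrite ln_powR ln_div ?posrE ?exprn_gt0 ?mulr_gt0 ?exprn_gt0 //.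
rewrite !lnM ?posrE ?exprn_gt0 ?mulr_gt0 ?exprn_gt0 ?powR_gt0 //.
rewrite !lnXn ?exprn_gt0 // lnM ?posrE ?exprn_gt0 ?mulr_gt0 ?exprn_gt0 ?powR_gt0 //.
rewrite lnM ?posrE ?exprn_gt0 ?powR_gt0 // ln_powR lnXn // ln_div ?posrE // lnXn //.
  rewrite -/a -/b -/c.
  rewrite -(mulr_natr c (l * n)%N) -(mulr_natr c (k * m)%N) -(mulr_natr a n) -(mulr_natr c n).
  rewrite -(mulr_natr _ m) -(mulr_natr c (n * m)%N) !natrM hk.
  have -> : - (eps * n%:R * (2 * l%:R / eps) / 8) * c = n%:R * (- (l%:R / 4) * c).
    by field; lra.
  have -> : c * (l%:R * n%:R) + c * (R * n%:R * m%:R) +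
     (a * n%:R + ((R + eps) * n%:R * (b - c) + c * n%:R)) * m%:R - c * (n%:R * m%:R)
     = n%:R * (l%:R * c + m%:R * D) by rewrite /D; ring.
  apply: ler_wpM2l => //; lra.
all: by rewrite ?invr_gt0 ?exprn_gt0.
Qed.


Lemma ceil_nat (RR : realType) (L : RR) : 0 < L ->
  exists m : nat, L <= m%:R /\ forall t : nat, L <= t%:R -> (m <= t)%N.
Proof.
move=> L0.
have c0 : (0 <= Num.ceil L)%R by rewrite ceil_ge0; lra.
exists `|Num.ceil L|%N; split.
  by rewrite natr_absz ger0_norm // ceil_ge.
move=> t hLt.
rewrite -lez_nat abszE ger0_norm // ceil_le_int.
by [].
Qed.

Lemma bin_le_exp (T : finType) l : ('C(#|T|, l) <= #|T| ^ l)%N.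
Proof.
apply: (leq_trans (leq_pmulr _ (fact_gt0 l))).
rewrite bin_ffact -(card_ord l) -card_inj_ffuns.
by apply: leq_trans (max_card _) _; rewrite card_ffun.
Qed.


Unset Implicit Arguments.

Theorem lemma3p3 (RR : realType) (F : finFieldType) (n k l : nat) (R eps : RR) :
  0 < R -> R < 1 -> 0 < eps -> 0 < 1 - R - eps -> (0 < l)%N ->
  Num.max ((l%:R : RR) `^ (8 * R / eps + 6)) (l%:R * (2 : RR) `^ (4 / eps))
    <= #|F|%:R ->
  k%:R = R * n%:R ->
  let L := 2 * l%:R / eps in
  (1 - (#|F|%:R : RR) `^ (- (eps * n%:R * L / 8))) * (#|F|%:R ^+ (n * k))
    <= #|[set G : 'M[F]_(n, k) | good_code l (1 - R - eps) L G]|%:R.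
Proof.
move=> R0 R1 e0 hRe l0 hq hk; rewrite [is_true _]/=; set L := 2 * l%:R / eps.
move: hq; rewrite ge_max => /andP [hq1 hq2].
have lpos : (0 : RR) < l%:R by rewrite ltr0n.
have p2 : (1 : RR) <= 2 `^ (4 / eps).
  rewrite -{1}(powRr0 2); apply: (ler_powR (a := 2)); [lra|].
  apply: divr_ge0; lra.
have Q0 : (0 : RR) < #|F|%:R.
  apply: lt_le_trans hq2; apply: mulr_gt0 => //; lra.
have lq : (l <= #|F|)%N.
  rewrite -(ler_nat RR); apply: le_trans hq2.
  by rewrite -{1}[l%:R]mulr1 ler_wpM2l // ltW.
have L0 : 0 < L by rewrite /L; apply: divr_gt0 => //; lra.
have [m [hmL hmin]] := ceil_nat L0.
pose Bd := [set G : 'M[F]_(n, k) | ~~ good_code l (1 - R - eps) L G].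
have main : (#|Bd|%:R : RR) <= (#|F|%:R ^+ (n * k)) * (#|F|%:R : RR) `^ (- (eps * n%:R * L / 8)).
  pose Ok := [set S : {ffun 'I_n -> {set F}} | [forall i, #|S i| == l]].
  pose X (S : {ffun 'I_n -> {set F}}) :=
    [set Y : {ffun 'I_m -> 'cV[F]_n} | [forall j, Y j \in lr_ball (1 - R - eps) S]].
  pose A (p : {ffun 'I_n -> {set F}} * {ffun 'I_m -> 'cV[F]_k}) :=
    [set G : 'M[F]_(n, k) | [ffun j => G *m p.2 j] \in X p.1].
  pose P (p : {ffun 'I_n -> {set F}} * {ffun 'I_m -> 'cV[F]_k}) :=
    (p.1 \in Ok) && row_free (\matrix_(j < m) (p.2 j)^T).
  have step1 : (#|Bd| <= \sum_(p | P p) #|A p|)%N.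
    apply: card_le_sum => G; rewrite inE /good_code negb_forall => /existsP [S].
    rewrite negb_imply => /andP [hS].
    rewrite negb_forall => /existsP [T]; rewrite !negb_imply => /and3P [hT hfree hsz].
    rewrite -leNgt in hsz.
    have mT : (m <= #|T|)%N := hmin _ hsz.
    have hsize : size (take m (enum T)) == m by rewrite size_takel // -cardE.
    pose t : m.-tuple 'cV[F]_n := Tuple hsize.
    have ft : free t.
      by apply: (catl_free (Y := drop m (enum T))); rewrite cat_take_drop.
    have tin : forall j : 'I_m, t`_j \in T.
      move=> j; rewrite -mem_enum; apply: (mem_take (n0 := m)); apply: mem_nth.
      by rewrite (eqP hsize).
    have tcode : forall j : 'I_m, exists w, t`_j == G *m w.
      move=> j; have := subsetP hT _ (tin j); rewrite inE => /andP [hc _].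
      by rewrite inE in hc; apply/existsP.
    pose u : {ffun 'I_m -> 'cV[F]_k} := [ffun j : 'I_m => odflt 0 [pick w : 'cV[F]_k | t`_j == G *m w]].
    have hu : forall j, G *m u j = t`_j.
      move=> j; rewrite ffunE; case: pickP => [w /eqP -> //|h].
      by have [w hw] := tcode j; rewrite h in hw.
    exists (S, u).
      by rewrite /P /= inE hS /=; exact: (rowfree_of_free ft hu).
    rewrite inE /X inE; apply/forallP => j; rewrite ffunE hu.
    by have := subsetP hT _ (tin j); rewrite inE => /andP [_ hb].
  pose Bb := 2 ^+ n * (((l%:R : RR) / #|F|%:R) `^ ((R + eps) * n%:R) * #|F|%:R ^+ n).
  pose K := Bb ^+ m * #|F|%:R ^+ (n * k) / #|F|%:R ^+ (n * m).
  have step2 : forall p, P p -> (#|A p|%:R : RR) <= K.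
    move=> [S u] /andP [hS hu] /=.
    have hc := count_fiber (X S) hu.
    have hX : #|X S| = (#|lr_ball (1 - R - eps) S| ^ m)%N.
      rewrite -[m in RHS]card_ord -card_ffun_on; apply: eq_card => Y.
      rewrite !inE; apply/forallP/ffun_onP => h j; exact: h.
    rewrite hX in hc.
    have hS' : forall i, #|S i| = l by move=> i; move: hS; rewrite inE => /forallP /(_ i) /eqP.
    have hb := ball_card (1 - R - eps) hS' l0 lq.
    rewrite (_ : 1 - (1 - R - eps) = R + eps) in hb; last by ring.
    have qnm : (0 : RR) < #|F|%:R ^+ (n * m) by rewrite exprn_gt0.
    have -> : (#|A (S, u)|%:R : RR) =
        #|lr_ball (1 - R - eps) S|%:R ^+ m * #|F|%:R ^+ (n * k) / #|F|%:R ^+ (n * m).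
      apply: (mulIf (x := #|F|%:R ^+ (n * m))); first by rewrite gt_eqF.
      rewrite mulfVK ?gt_eqF // -!natrX -!natrM; congr (_%:R); exact: hc.
    rewrite /K; apply: ler_wpM2r; first by rewrite invr_ge0 ltW.
    apply: ler_wpM2r; first by rewrite exprn_ge0 // ltW.
    by apply: lerXn2r; rewrite ?nnegrE ?ler0n //; apply: ltW; rewrite /Bb; pos.
  have step3 : (#|Ok| <= #|F| ^ (l * n))%N.
    pose Rl := [set A : {set F} | #|A| == l].
    have -> : #|Ok| = #|[pred S : {ffun 'I_n -> {set F}} | S \in ffun_on Rl]|.
      apply: eq_card => S; rewrite !inE /=.
      apply/forallP/ffun_onP => h i; first by rewrite inE h.
      by have := h i; rewrite inE.
    rewrite card_ffun_on card_draws card_ord expnM.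
    have e : forall a b e : nat, (a <= b)%N -> (a ^ e <= b ^ e)%N.
      by move=> a b e' hab; elim: e' => // e' IH; rewrite !expnS leq_mul.
    by apply: e; apply: bin_le_exp.
  have step4 : (#|Bd|%:R : RR) <= (#|F| ^ (l * n))%:R * (#|F| ^ (k * m))%:R * K.
    apply: le_trans (_ : _ <= (\sum_(p | P p) #|A p|)%:R) _; first by rewrite ler_nat.
    rewrite natr_sum; apply: le_trans (ler_sum _ step2) _.
    have K0 : 0 <= K.
      rewrite /K /Bb; apply: ltW; pos.
    rewrite [X in X <= _](_ : _ = \sum_(p in [set p | P p]) K); last first.
      by apply: eq_bigl => p; rewrite inE.
    rewrite sumr_const -[K *+ _]mulr_natr [X in _ <= X]mulrC; apply: ler_wpM2l => //.
    rewrite -natrM ler_nat.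
    have hsub : (#|[set p | P p]| <= #|setX Ok [set: {ffun 'I_m -> 'cV[F]_k}]|)%N.
      apply: subset_leq_card; apply/subsetP => p; rewrite inE => /andP [h1 _].
      by rewrite inE /= h1 inE.
    apply: leq_trans hsub _.
    rewrite cardsX cardsT card_ffun card_mx card_ord muln1 -expnM.
    by rewrite leq_mul2r step3 orbT.
  apply: le_trans step4 _.
  have := @final_ineq RR n k l m R eps _ R0 e0 l0 Q0 hq1 hq2 hk hmL.
  rewrite -/L -/Bb => hf.
  rewrite !natrX.
  have -> : (#|F|%:R : RR) ^+ (l * n) * #|F|%:R ^+ (k * m) * K =
     #|F|%:R ^+ (n * k) * (#|F|%:R ^+ (l * n) * #|F|%:R ^+ (k * m) * Bb ^+ m / #|F|%:R ^+ (n * m)).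
    by rewrite /K; ring.
  by apply: ler_wpM2l => //; rewrite exprn_ge0 // ltW.
have hC := cardsC [set G : 'M[F]_(n, k) | good_code l (1 - R - eps) L G].
have hB : ~: [set G : 'M[F]_(n, k) | good_code l (1 - R - eps) L G] = Bd.
  by apply/setP => G; rewrite !inE.
rewrite hB card_mx in hC.
have hle : (#|Bd| <= #|F| ^ (n * k))%N by rewrite -hC leq_addl.
have -> : #|[set G : 'M[F]_(n, k) | good_code l (1 - R - eps) L G]| = (#|F| ^ (n * k) - #|Bd|)%N.
  by rewrite -hC addnK.
rewrite natrB // natrX mulrBl mul1r [_ `^ _ * _]mulrC; lra.
Qed.
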